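(* Let $\tilde{\mathbf M}_D,\tilde{\mathbf S}_D\in\mathbb R^{\tilde n\times\tilde n}$ be block-diagonal positive definite matrices, let $\tilde{\mathbf M}_F,\tilde{\mathbf S}_F\in\mathbb R^{\tilde n\times\tilde n}$ be arbitrary (coupling) matrices, and set $\tilde{\mathbf M}=\tilde{\mathbf M}_D+\tilde{\mathbf M}_F$, $\tilde{\mathbf S}=\tilde{\mathbf S}_D+\tilde{\mathbf S}_F$. Consider the linear ODE $$\tilde{\mathbf M}_D\dot{\tilde{\mathbf x}}+\tilde{\mathbf S}_D\tilde{\mathbf x}+\tilde{\mathbf M}_F\dot{\tilde{\mathbf x}}+\tilde{\mathbf S}_F\tilde{\mathbf x}=\tilde{\mathbf u}(t)$$ and its ''hybrid Euler'' time discretization with step $\delta>0$ on an interval starting at time $t_q$: $$\tilde{\mathbf M}_D\frac{\tilde{\mathbf x}_{q,\ell+1}-\tilde{\mathbf x}_{q,\ell}}{\delta}+\tilde{\mathbf S}_D\tilde{\mathbf x}_{q,\ell+1}+\tilde{\mathbf M}_F\frac{\tilde{\mathbf x}_{q,\ell}-\tilde{\mathbf x}_{q,\ell-1}}{\delta}+\tilde{\mathbf S}_F\tilde{\mathbf x}_{q,\ell}=\tilde{\mathbf u}(t_q+(\ell+1)\delta),\quad \ell=0,1,\dots,$$ initialized by $\tilde{\mathbf x}_{q,0}=\tilde{\mathbf x}_{q,-1}=\tilde{\mathbf x}(t_q)$. Then this scheme is consistent with local truncation error of order $1$, i.e., for every smooth function $\boldsymbol\xi$ and every $t$, with $\mathcal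 D(\boldsymbol\xi,t)=\tilde{\mathbf M}\dot{\boldsymbol\xi}(t)+\tilde{\mathbf S}\boldsymbol\xi(t)$ and $$\mathcal D_\delta(\boldsymbol\xi,t)=\tilde{\mathbf M}_D\frac{\boldsymbol\xi(t+\delta)-\boldsymbol\xi(t)}{\delta}+\tilde{\mathbf S}_D\boldsymbol\xi(t+\delta)+\tilde{\mathbf M}_F\frac{\boldsymbol\xi(t)-\boldsymbol\xi(t-\delta)}{\delta}+\tilde{\mathbf S}_F\boldsymbol\xi(t),$$ one has $\mathcal D_\delta(\boldsymbol\xi,t)-\mathcal D(\boldsymbol\xi,t)=O(\delta)$ as $\delta\to0$. Further, the scheme is zero-stable provided that $\rho(\tilde{\mathbf M}_D^{-1}\tilde{\mathbf M}_F)<1$, where $\rho(\cdot)$ denotes the spectral radius.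
   Context: Origin of the matrices: a scalar field obeying a linear PDE $\partial x/\partial t+\mathcal A(x)=f$ on a bounded domain $\Omega$ is discretized by finite elements with basis functions $\phi_1,\dots,\phi_n$, giving $\mathbf M\dot{\mathbf x}+\mathbf S\mathbf x=\mathbf u$ with positive definite mass matrix $\mathbf M=\int_\Omega\boldsymbol\phi\boldsymbol\phi^T$ and stiffness matrix $\mathbf S$. The domain is decomposed into overlapping subdomains $\Omega_1,\dots,\Omega_N$; $\mathbf x^m$ collects the FE coefficients of vertices internal to $\Omega_m$ (or on $\partial\Omega\cap\partial\Omega_m$), and the augmented state is $\tilde{\mathbf x}=\mathrm{col}\{\mathbf x^1,\dots,\mathbf x^N\}$ (with repeated components due to overlap). The rows of the FE system for $\mathbf x^m$ read $\mathbf M^{mm}\dot{\mathbf x}^m+\sum_{j\ne m}\mathbf M^{mj}\dot{\mathbf x}^j+\mathbf S^{mm}\mathbf x^m+\sum_{j\ne m}\mathbf S^{mj}\mathbf x^j=\mathbf u^m$, where $\mathbf M^{mm},\mathbf S^{mm}$ are positive definite; then $\tilde{\mathbf M}_D=\mathrm{blockdiag}(\mathbf M^{11},\dots,\mathbf M^{NN})$, $\tilde{\mathbf S}_D=\mathrm{blockdiag}(\mathbf S^{11},\dots,\mathbf S^{NN})$, and $\tilde{\mathbf M}_F,\tilde{\mathbf S}_F$ collect the coupling blocks $\mathbf M^{mj},\mathbf S^{mj}$. Zero-stability is meant in the standard sense of the numerical analysis of multistep time-discretization schemes (stability of the limiting recursion $\tilde{\mathbf M}_D(\tilde{\mathbf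 x}_{\ell+1}-\tilde{\mathbf x}_\ell)+\tilde{\mathbf M}_F(\tilde{\mathbf x}_\ell-\tilde{\mathbf x}_{\ell-1})=0$ obtained as $\delta\to0$). *)

(* Defs.v *)
From HB Require Import structures.
From mathcomp Require Import all_boot all_order all_algebra.
From mathcomp Require Import all_classical all_reals all_analysis.
From mathcomp Require Import complex.
Set Implicit Arguments. Unset Strict Implicit. Unset Printing Implicit Defensive.
Import Order.TTheory GRing.Theory Num.Theory.
Local Open Scope ring_scope.
Local Open Scope classical_set_scope.

Definition posdef (R : realType) (n : nat) (A : 'M[R]_n) : Prop :=
  forall x : 'cV[R]_n, x != 0 -> 0 < (x^T *m A *m x) 0 0.

Definition smooth (R : realType) (f : R -> R) : Prop :=
  forall (k : nat) (t : R), derivable (derive1n k f) t 1.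

Definition vecfun (R : realType) (n : nat) (xi : 'I_n -> R -> R) (t : R) : 'cV[R]_n :=
  \col_i xi i t.

Definition vecderiv (R : realType) (n : nat) (xi : 'I_n -> R -> R) (t : R) : 'cV[R]_n :=
  \col_i (derive1 (xi i)) t.

Definition Dcont (R : realType) (n : nat) (MD SD MF SF : 'M[R]_n)
  (xi : 'I_n -> R -> R) (t : R) : 'cV[R]_n :=
  (MD + MF) *m vecderiv xi t + (SD + SF) *m vecfun xi t.

Definition Ddisc (R : realType) (n : nat) (MD SD MF SF : 'M[R]_n)
  (xi : 'I_n -> R -> R) (delta t : R) : 'cV[R]_n :=
  MD *m ((delta^-1) *: (vecfun xi (t + delta) - vecfun xi t))
  + SD *m vecfun xi (t + delta)
  + MF *m ((delta^-1) *: (vecfun xi t - vecfun xi (t - delta)))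
  + SF *m vecfun xi t.

Definition trunc_err_O_delta (R : realType) (n : nat) (MD SD MF SF : 'M[R]_n)
  (xi : 'I_n -> R -> R) (t : R) : Prop :=
  exists (C eta : R), 0 < eta /\
    forall delta : R, 0 < `|delta| < eta ->
      forall i : 'I_n,
        `|(Ddisc MD SD MF SF xi delta t - Dcont MD SD MF SF xi t) i 0| <= C * `|delta|.

Definition spectral_radius (R : realType) (n : nat) (A : 'M[R]_n) : R :=
  sup [set r : R | exists lam : R[i],
         eigenvalue (map_mx (fun x : R => x%:C%C) A) lam /\ r%:C%C = `|lam|].

(* Zero-stability: every solution of the limiting (delta -> 0) recursion
     MD (x_{l+1} - x_l) + MF (x_l - x_{l-1}) = 0,   l = 0, 1, ...
   is bounded, whatever the initial data x_{-1}, x_0.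
   Indexing: x 0 = x_{-1}, x (l.+1) = x_l. *)
Definition zero_stable (R : realType) (n : nat) (MD MF : 'M[R]_n) : Prop :=
  forall x : nat -> 'cV[R]_n,
    (forall l : nat, MD *m (x l.+2 - x l.+1) + MF *m (x l.+1 - x l) = 0) ->
    exists B : R, forall (l : nat) (i : 'I_n), `|x l i 0| <= B.

(* Main.v *)
Require Import Defs.
From HB Require Import structures.
From mathcomp Require Import all_boot all_order all_algebra.
From mathcomp Require Import all_classical all_reals all_analysis.
From mathcomp Require Import complex.
From mathcomp Require Import ring lra.
Import Order.TTheory GRing.Theory Num.Theory.
Local Open Scope ring_scope.

Section S.
Local Open Scope complex_scope.
Context {R : realType}.
Local Notation C := R[i].

Lemma kpow_bound (s' s : R) : 0 < s' -> s' < s -> forall k : nat,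
  k%:R * s' ^+ k * (s - s') <= s' * s ^+ k.
Proof.
move=> h0 h1; elim=> [|k IH]; first by rewrite mulr0n !mul0r expr0 mulr1 ltW.
have hk : s' ^+ k <= s ^+ k by rewrite lerXn2r // ?nnegrE ltW // (lt_trans h0).
have hs : 0 <= s ^+ k by rewrite exprn_ge0 // ltW // (lt_trans h0).
have hs' : 0 <= s' ^+ k by rewrite exprn_ge0 // ltW.
rewrite !exprS -natr1.
have A1 := ler_wpM2l (ltW h0) IH.
have A2 : 0 <= s' * (s - s') * (s ^+ k - s' ^+ k).
  by rewrite !mulr_ge0 ?subr_ge0 // ltW // subr_gt0.
nra.
Qed.

Lemma rec_decay (a : nat -> R) (r s' s K : R) :
  0 <= r -> r <= s' -> 0 < s' -> s' < s -> 0 <= K ->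
  (forall k, 0 <= a k) ->
  (forall k, a k.+1 <= r * a k + K * s' ^+ k) ->
  forall k, a k <= (a 0%N + K / (s - s')) * s ^+ k.
Proof.
move=> r0 rs s0 ss K0 a0 ak.
have claim : forall k, a k * s' <= s' ^+ k * (s' * a 0%N + k%:R * K).
  elim=> [|k IH]; first by rewrite expr0 mul0r addr0 mul1r mulrC.
  have := ak k; have := a0 k; have := a0 k.+1.
  have hs' : 0 <= s' ^+ k by rewrite exprn_ge0 // ltW.
  rewrite exprS -natr1 => h1 h2 h3.
  have B1 := ler_wpM2r (ltW s0) h3.
  have B2 : 0 <= (s' - r) * a k * s' by rewrite !mulr_ge0 ?subr_ge0 // ltW.
  have B3 := ler_wpM2l (ltW s0) IH.
  nra.
move=> k; have := claim k; have := kpow_bound _ _ s0 ss k.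
have hs : 0 < s ^+ k by rewrite exprn_gt0 // (lt_trans s0).
have hs' : 0 <= s' ^+ k by rewrite exprn_ge0 // ltW.
have hss : 0 < s - s' by rewrite subr_gt0.
have := a0 0%N.
move=> h0 h1 h2.
set q := K / (s - s').
have hq : q * (s - s') = K by rewrite /q mulfVK // gt_eqF.
have q0 : 0 <= q by rewrite /q divr_ge0 // ltW.
have C1 := ler_wpM2l q0 h1.
have hk : s' ^+ k <= s ^+ k by rewrite lerXn2r // ?nnegrE ltW // (lt_trans s0).
have C2 : 0 <= a 0%N * (s ^+ k - s' ^+ k) by rewrite mulr_ge0 // subr_ge0.
suff : a k * s' <= (a 0%N + q) * s ^+ k * s'.
  by rewrite ler_pM2r.
nra.
Qed.
Definition nrm (z : C) : R := complex.Re `|z|.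

Lemma nrmE (z : C) : `|z| = (nrm z)%:C.
Proof.
by rewrite {1}[`|z|]complexE (ger0_Im (normr_ge0 _)) rmorph0 mulr0 addr0.
Qed.

Lemma nrm_ge0 z : 0 <= nrm z.
Proof. by rewrite -lecR rmorph0 -nrmE. Qed.

Lemma nrmD x y : nrm (x + y) <= nrm x + nrm y.
Proof. by rewrite -lecR rmorphD -!nrmE ler_normD. Qed.

Lemma nrmM x y : nrm (x * y) = nrm x * nrm y.
Proof. by apply: complexI; rewrite rmorphM -!nrmE normrM. Qed.

Lemma nrm0 : nrm 0 = 0.
Proof. by rewrite /nrm normr0. Qed.

Lemma nrmR (y : R) : nrm y%:C = `|y|.
Proof. by rewrite /nrm normc_def /= expr0n /= addr0 sqrtr_sqr. Qed.

Lemma le_sum1 (I : finType) (f : I -> R) x : (forall y, 0 <= f y) -> f x <= \sum_y f y.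
Proof. by move=> h; rewrite (bigD1 x) //= lerDl sumr_ge0. Qed.

Lemma mx_decay n' m (A : 'M[C]_n'.+1) (rho : R) (rs : seq C) :
  0 <= rho -> (forall r, r \in rs -> nrm r <= rho) ->
  forall B : 'M[C]_(n'.+1, m),
  horner_mx A (\prod_(z <- rs) ('X - z%:P)) *m B = 0 ->
  forall s, rho < s ->
  exists K, 0 <= K /\ forall k i j, nrm ((A ^+ k *m B) i j) <= K * s ^+ k.
Proof.
move=> rho0; elim: rs => [|r rs IH] Hr B HB s Hs.
  move: HB; rewrite big_nil rmorph1 mul1mx => ->.
  by exists 0; split => // k i j; rewrite mulmx0 mxE nrm0 mul0r.
move: HB; rewrite big_cons mulrC rmorphM /= rmorphB /= horner_mx_X horner_mx_C.
rewrite -mulmxE -mulmxA => HB.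
set B' := (A - r%:M) *m B in HB.
set s' := (rho + s) / 2.
have hs1 : rho < s' by rewrite /s'; lra.
have hs2 : s' < s by rewrite /s'; lra.
have [K' [K'0 HK']] := IH (fun z zr => Hr z (mem_behead (zr : z \in behead (r :: rs)))) B' HB s' hs1.
have hr : nrm r <= rho by apply: Hr; rewrite mem_head.
exists (\sum_i \sum_j nrm (B i j) + K' / (s - s')); split.
  by rewrite addr_ge0 ?sumr_ge0 // => *; rewrite ?sumr_ge0 // => *; rewrite ?nrm_ge0 // divr_ge0 // subr_ge0 ltW.
move=> k i j.
have rec : forall k, A ^+ k.+1 *m B = r *: (A ^+ k *m B) + A ^+ k *m B'.
  move=> l; have e : A ^+ l *m A = A ^+ l.+1 by rewrite exprSr mulmxE.
  rewrite /B' mulmxBl mulmxBr mul_scalar_mx scalemxAr mulmxA e.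
  by rewrite addrC subrK.
have := @rec_decay (fun k => nrm ((A ^+ k *m B) i j)) (nrm r) s' s K' (nrm_ge0 _)
  (ltW (le_lt_trans hr hs1)) (le_lt_trans rho0 hs1) hs2 K'0 (fun _ => nrm_ge0 _).
move=> H; apply: le_trans (H _ k) _.
  move=> l /=; rewrite rec mxE.
  have -> : (r *: (A ^+ l *m B)) i j = r * (A ^+ l *m B) i j by rewrite mxE.
  apply: le_trans (nrmD _ _) _; rewrite nrmM lerD2l; exact: HK'.
rewrite ler_wpM2r // ?exprn_ge0 ?(ltW (le_lt_trans rho0 Hs)) // lerD2r expr0 mul1mx.
apply: (le_trans _ (le_sum1 _ (fun i => \sum_j nrm (B i j)) i _)).
  by apply: (le_sum1 _ (fun j => nrm (B i j))) => y; apply: nrm_ge0.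
by move=> y; rewrite sumr_ge0 // => *; apply: nrm_ge0.
Qed.
End S.

Section T.
Local Open Scope complex_scope.
Context {R : realType}.
Local Notation C := R[i].

Lemma nrm_le_sum (rs : seq C) z : z \in rs -> nrm z <= \sum_(y <- rs) nrm y.
Proof.
elim: rs => // a rs IH; rewrite in_cons big_cons => /orP [/eqP ->|h].
  by rewrite lerDl sumr_ge0 // => *; apply: nrm_ge0.
by apply: le_trans (IH h) _; rewrite lerDr nrm_ge0.
Qed.

Lemma geom_sum (s : R) l : 0 <= s < 1 -> \sum_(j < l) s ^+ j <= (1 - s)^-1.
Proof.
move=> /andP [s0 s1].
have e : \sum_(j < l) s ^+ j * (1 - s) = 1 - s ^+ l.
  elim: l => [|l IH]; first by rewrite big_ord0 expr0 subrr.
  by rewrite big_ord_recr /= IH exprS; ring.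
have h1 : 0 < 1 - s by rewrite subr_gt0.
rewrite -(ler_pM2r h1) big_distrl /= e mulVf ?gt_eqF //.
by rewrite lerBlDr lerDl exprn_ge0.
Qed.

Lemma map_mxX n (A : 'M[R]_n) l :
  map_mx (real_complex R) (A ^+ l) = (map_mx (real_complex R) A) ^+ l.
Proof.
elim: l => [|l IH]; first by rewrite !expr0 map_mx1.
by rewrite !exprS -!mulmxE map_mxM IH.
Qed.

Lemma zs n (MD MF : 'M[R]_n) : MD \in unitmx ->
  spectral_radius (invmx MD *m MF) < 1 -> zero_stable MD MF.
Proof.
move=> uMD hrho x hx.
case: n MD MF uMD hrho x hx => [|n'] MD MF uMD hrho x hx.
  by exists 0 => l [].
set A := invmx MD *m MF in hrho.
set rho := spectral_radius A in hrho.
pose d l := x l.+1 - x l.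
have hd : forall l, d l.+1 = - (A *m d l).
  move=> l; have := hx l; rewrite -/(d l) -/(d l.+1) => /eqP.
  rewrite addr_eq0 => /eqP h.
  by rewrite -(mulKmx uMD (d l.+1)) h /A mulmxN mulmxA.
have hd2 : forall l, d l = (- 1) ^+ l *: (A ^+ l *m d 0%N).
  elim=> [|l IH]; first by rewrite expr0 scale1r expr0 mul1mx.
  have eA : A *m A ^+ l = A ^+ l.+1 by rewrite exprS mulmxE.
  by rewrite hd IH scalemxAr mulmxA eA -scalemxAr [(-1) ^+ l.+1]exprS mulN1r scaleNr.
pose Ac := map_mx (real_complex R) A.
have [rs Hq] := closed_field_poly_normal (char_poly Ac).
move: Hq; rewrite (monicP (char_poly_monic Ac)) scale1r => Hq.
have CH := Cayley_Hamilton Ac.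
rewrite Hq in CH.
have Hr : forall r, r \in rs -> nrm r <= rho.
  move=> r hr.
  have ev : eigenvalue Ac r by rewrite eigenvalue_root_char Hq root_prod_XsubC.
  have ub : has_ubound [set r : R | exists lam : R[i],
         eigenvalue (map_mx (fun x : R => x%:C%C) A) lam /\ r%:C%C = `|lam|].
    exists (\sum_(y <- rs) nrm y) => e [lam [evl hl]].
    have lrs : lam \in rs by rewrite -root_prod_XsubC -Hq -eigenvalue_root_char.
    have -> : e = nrm lam by apply: complexI; rewrite hl nrmE.
    exact: nrm_le_sum.
  apply: (ub_le_sup ub).
  by exists r; split => //; rewrite nrmE.
pose rho1 := Num.max rho 0.
have rho10 : 0 <= rho1 by rewrite /rho1 le_max lexx orbT.
have Hr1 : forall r, r \in rs -> nrm r <= rho1.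
  by move=> r /Hr h; rewrite /rho1 le_max h.
have rho11 : rho1 < 1 by rewrite /rho1 gt_max hrho ltr01.
pose s := (rho1 + 1) / 2.
have hs : rho1 < s by rewrite /s; lra.
have hs1 : 0 <= s < 1 by apply/andP; split; rewrite /s; lra.
have hB : horner_mx Ac (\prod_(z <- rs) ('X - z%:P)) *m map_mx (real_complex R) (d 0%N) = 0.
  by rewrite CH mul0mx.
have [K [K0 HK]] := mx_decay _ _ Ac rho1 rs rho10 Hr1 _ hB _ hs.
exists (\sum_i `|x 0%N i 0| + K * (1 - s)^-1) => l i.
have hdb : forall j, `|d j i 0| <= K * s ^+ j.
  move=> j; rewrite hd2 mxE normrM normrX normrN normr1 expr1n mul1r.
  rewrite -nrmR.
  have -> : ((A ^+ j *m d 0%N) i 0)%:C = (Ac ^+ j *m map_mx (real_complex R) (d 0%N)) i 0.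
    by rewrite -map_mxX -map_mxM [RHS]mxE.
  exact: HK.
have claim : forall l, `|x l i 0| <= `|x 0%N i 0| + K * \sum_(j < l) s ^+ j.
  elim=> [|l' IH]; first by rewrite big_ord0 mulr0 addr0.
  have -> : x l'.+1 = x l' + d l' by rewrite /d addrC subrK.
  rewrite mxE big_ord_recr /= mulrDr addrA.
  apply: le_trans (ler_normD _ _) _; exact: lerD IH (hdb l').
apply: le_trans (claim l) _; apply: lerD.
  by apply: (le_sum1 _ (fun i => `|x 0%N i 0|)) => y.
by apply: ler_wpM2l => //; apply: geom_sum.
Qed.
End T.

Section U.
Context {R : realType}.

Lemma posdef_unit n (B : 'M[R]_n) : posdef B -> B \in unitmx.
Proof.
move=> H; rewrite unitmxE unitfE; apply/negP => /det0P [v v0 vB].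
have := H v^T; rewrite trmx_eq0 v0 trmxK vB mul0mx mxE => /(_ isT).
by rewrite ltxx.
Qed.

Lemma mxdiag_mul (N : nat) (p : 'I_N -> nat) (D E : forall m : 'I_N, 'M[R]_(p m)) :
  \mxdiag_(m < N) D m *m \mxdiag_(m < N) E m = \mxdiag_(m < N) (D m *m E m).
Proof.
rewrite {2}/mxdiag mul_mxdiag_mxblock /mxdiag; apply: eq_mxblock => i j.
by case: eqP => [<-|_]; rewrite ?conform_mx_id ?mulmx0.
Qed.

Lemma mxdiag_unit (N : nat) (p : 'I_N -> nat) (D : forall m : 'I_N, 'M[R]_(p m)) :
  (forall m, D m \in unitmx) -> \mxdiag_(m < N) D m \in unitmx.
Proof.
move=> H.
have : \mxdiag_(m < N) D m *m \mxdiag_(m < N) invmx (D m) = 1%:M.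
  rewrite mxdiag_mul -(mxdiagZ 1); apply: eq_mxdiag => m; exact: mulmxV.
by case/mulmx1_unit.
Qed.
End U.

Section V.
Import numFieldNormedType.Exports.
Local Open Scope classical_set_scope.
Context {R : realType}.

Lemma deriv_lip (g : R -> R) t : derivable g t 1 ->
  exists K e, 0 < e /\ 0 <= K /\ forall c, `|c - t| < e -> `|g c - g t| <= K * `|c - t|.
Proof.
move=> dg.
have cv := (dg : _ --> 'D_1 g t).
have := cvgr_dist_le _ _ cv _ ltr01.
move=> /(_ (dnbhs_filter _)).
rewrite near_withinE => /nbhs_norm0P [e /= e0 He].
exists (`|'D_1 g t| + 1), e; split => //; split; first by rewrite addr_ge0.
move=> c hc; have [->|hne] := eqVneq c t; first by rewrite !subrr !normr0 mulr0.
have h0 : c - t != 0 by rewrite subr_eq0.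
have := He (c - t) hc h0.
have -> : (c - t)%:A + t = c by rewrite /GRing.scale /= mulr1 subrK.
set q := (c - t)^-1 *: (g c - g t) => hq.
have hq2 : `|q| <= `|'D_1 g t| + 1.
  have -> : q = 'D_1 g t - ('D_1 g t - q) by rewrite opprB addrC subrK.
  by apply: le_trans (ler_normB _ _) _; rewrite lerD2l.
have -> : g c - g t = (c - t) * q.
  by rewrite /q /GRing.scale /= mulrA mulfV // mul1r.
by rewrite normrM mulrC ler_wpM2r.
Qed.

Lemma mvt_gen (f : R -> R) : (forall x, derivable f x 1) -> forall a b,
  exists c, `|c - a| <= `|b - a| /\ f b - f a = (derive1 f) c * (b - a).
Proof.
move=> hf a b.
have hd : forall x y z : R, z \in `]x, y[%R -> is_derive z 1 f ((derive1 f) z).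
  by move=> x y z _; rewrite derive1E; apply: derivableP.
have hc : forall x y : R, {within `[x, y], continuous f}.
  by move=> x y; apply: derivable_within_continuous => z _.
have [ab|ba] := leP a b.
  have [c /andP [c1 c2] e] := MVT_segment ab (hd a b) (hc a b).
  exists c; split => //.
  by rewrite !ger0_norm ?subr_ge0 // ?lerD2r //.
have [c /andP [c1 c2] e] := MVT_segment (ltW ba) (hd b a) (hc b a).
exists c; split.
  by rewrite !ler0_norm ?subr_le0 ?(ltW ba) // !opprB lerD2l lerN2.
by rewrite -opprB e -mulrN opprB.
Qed.

Lemma comp_bound (f : R -> R) : smooth f -> forall t, exists K e, 0 < e /\ 0 <= K /\
  forall d, 0 < `|d| < e ->
  `|d^-1 * (f (t + d) - f t) - (derive1 f) t| <= K * `|d| /\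
  `|d^-1 * (f t - f (t - d)) - (derive1 f) t| <= K * `|d| /\
  `|f (t + d) - f t| <= K * `|d|.
Proof.
move=> sf t.
have hf : forall x, derivable f x 1 by move=> x; have := sf 0%N x; rewrite derive1n0.
have hf' : derivable (derive1 f) t 1 by have := sf 1%N t; rewrite derive1n1.
have [K1 [e1 [e10 [K10 HK1]]]] := deriv_lip _ _ hf'.
exists (K1 + `|(derive1 f) t|), (Num.min e1 1); split; first by rewrite lt_min e10 ltr01.
split; first by rewrite addr_ge0.
move=> d /andP [d0 de]; move: de; rewrite lt_min => /andP [de1 de2].
have dn0 : d != 0 by rewrite -normr_gt0.
have hK : K1 * `|d| <= (K1 + `|(derive1 f) t|) * `|d| by rewrite ler_wpM2r // lerDl.
have [c [hc1 hc2]] := mvt_gen _ hf t (t + d).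
have [c' [hc1' hc2']] := mvt_gen _ hf t (t - d).
rewrite addrAC subrr add0r in hc1 hc2.
rewrite addrAC subrr add0r normrN in hc1' hc2'.
split; [|split].
- rewrite hc2 mulrC mulfK //; apply: le_trans hK.
  by apply: le_trans (HK1 c (le_lt_trans hc1 de1)) _; rewrite ler_wpM2l.
- have -> : f t - f (t - d) = (derive1 f) c' * d by rewrite -opprB hc2' mulrN opprK.
  rewrite mulrC mulfK //; apply: le_trans hK.
  by apply: le_trans (HK1 c' (le_lt_trans hc1' de1)) _; rewrite ler_wpM2l.
- rewrite hc2 normrM ler_wpM2r //.
  have -> : (derive1 f) c = (derive1 f) t + ((derive1 f) c - (derive1 f) t) by rewrite addrC subrK.
  apply: le_trans (ler_normD _ _) _; rewrite addrC lerD2r.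
  apply: le_trans (HK1 c (le_lt_trans hc1 de1)) _.
  rewrite -[leRHS]mulr1 ler_wpM2l //; apply: ltW; exact: le_lt_trans hc1 de2.
Qed.


Lemma le_sum1' (I : finType) (f : I -> R) x : (forall y, 0 <= f y) -> f x <= \sum_y f y.
Proof. by move=> h; rewrite (bigD1 x) //= lerDl sumr_ge0. Qed.

Lemma alg3 (a b c e x1 x0 xm y d : R) :
  a * (d^-1 * (x1 - x0)) + b * x1 + c * (d^-1 * (x0 - xm)) + e * x0 -
  ((a + c) * y + (b + e) * x0) =
  a * (d^-1 * (x1 - x0) - y) + c * (d^-1 * (x0 - xm) - y) + b * (x1 - x0).
Proof. ring. Qed.

Lemma trunc n (MD SD MF SF : 'M[R]_n) (xi : 'I_n -> R -> R) :
  (forall i, smooth (xi i)) -> forall t, trunc_err_O_delta MD SD MF SF xi t.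
Proof.
move=> hs t.
have : forall j, exists Ke : R * R, 0 < Ke.2 /\ 0 <= Ke.1 /\
  forall d, 0 < `|d| < Ke.2 ->
  `|d^-1 * (xi j (t + d) - xi j t) - (derive1 (xi j)) t| <= Ke.1 * `|d| /\
  `|d^-1 * (xi j t - xi j (t - d)) - (derive1 (xi j)) t| <= Ke.1 * `|d| /\
  `|xi j (t + d) - xi j t| <= Ke.1 * `|d|.
  move=> j; have [K [e H]] := comp_bound _ (hs j) t; by exists (K, e).
move=> /choice [F HF].
set Ksum := \sum_j (F j).1.
set eta := \big[Order.min/1]_j (F j).2.
set Msum := \sum_i \sum_j (`|MD i j| + `|SD i j| + `|MF i j|).
have K0 : forall j, 0 <= (F j).1 by move=> j; have [_ [h _]] := HF j.
have Kle : forall j, (F j).1 <= Ksum by move=> j; apply: le_sum1'.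
exists (Msum * Ksum), eta; split.
  by apply: lt_bigmin => // j _; have [h _] := HF j.
move=> d /andP [d0 deta] i.
have hb : forall j, 0 < `|d| < (F j).2.
  by move=> j; rewrite d0 /=; apply: lt_le_trans deta _; apply: bigmin_le.
rewrite /Ddisc /Dcont /vecfun /vecderiv !mxE.
rewrite -!big_split /= -sumrB.
under eq_bigr => j _ do rewrite !mxE alg3.
apply: le_trans (ler_norm_sum _ _ _) _.
apply: (@le_trans _ _ (\sum_j (`|MD i j| + `|SD i j| + `|MF i j|) * (Ksum * `|d|))).
  apply: ler_sum => j _.
  have [_ [_ H]] := HF j; have [h1 [h2 h3]] := H d (hb j).
  have hK : (F j).1 * `|d| <= Ksum * `|d| by rewrite ler_wpM2r.
  rewrite !mulrDl; apply: le_trans (ler_normD _ _) _.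
  rewrite addrAC; apply: lerD; last first.
    by rewrite normrM ler_wpM2l //; apply: le_trans hK.
  apply: le_trans (ler_normD _ _) _; apply: lerD.
    by rewrite normrM ler_wpM2l //; apply: le_trans hK.
  by rewrite normrM ler_wpM2l //; apply: le_trans hK.
rewrite -big_distrl /= mulrA ler_wpM2r //.
rewrite ler_wpM2r; first last.
- apply: (le_sum1' _ (fun i => \sum_j (`|MD i j| + `|SD i j| + `|MF i j|)) i) => y.
  by rewrite sumr_ge0 // => *; rewrite !addr_ge0.
- by rewrite sumr_ge0 // => j _; apply: K0.
by [].
Qed.
End V.

Theorem theorem1 (R : realType) (N : nat) (p : 'I_N -> nat)
  (MB SB : forall m : 'I_N, 'M[R]_(p m))
  (MF SF : 'M[R]_(\sum_(m < N) p m)) :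
  (forall m : 'I_N, posdef (MB m)) ->
  (forall m : 'I_N, posdef (SB m)) ->
  let MD := \mxdiag_(m < N) MB m in
  let SD := \mxdiag_(m < N) SB m in
  (forall (xi : 'I_(\sum_(m < N) p m) -> R -> R),
      (forall i, smooth (xi i)) ->
      forall t : R, trunc_err_O_delta MD SD MF SF xi t)
  /\
  (spectral_radius (invmx MD *m MF) < 1 -> zero_stable MD MF).
Proof.
move=> hMB hSB MD SD; split.
  by move=> xi hs t; apply: trunc.
apply: zs; apply: mxdiag_unit => m; exact: posdef_unit.
Qed.
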